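(* Under the setting in the context, for any $u\in\mathbb{R}^d$ and every $S\ge2$, $$KA_S(\bar f(\tilde y_S)-\bar f(u))\le\frac K2\|x_0-u\|^2-\frac{K(1+A_S\gamma)}{2}\|v_{S,K}-u\|^2-\frac K4\|v_{1,1}-v_{1,0}\|^2+\sum_{s=2}^S\sum_{k=1}^K E_{s,k}(u),$$ where $$E_{s,k}(u)=A_s(f(y_{s,k})-f(x_{s,k}))-A_{s-1}(f(\tilde y_{s-1})-f(x_{s,k}))+a_s\langle\nabla f(x_{s,k})-q_{s,k},x_{s,k}-u\rangle+a_s\langle q_{s,k},x_{s,k}-v_{s,k}\rangle-\frac{K(1+A_{s-1}\gamma)}{2}\|v_{s,k}-v_{s,k-1}\|^2.$$
   Context: Problem $\min_x\bar f(x)=f(x)+g(x)$, where $f:\mathbb{R}^d\to\mathbb{R}$ is convex, continuously differentiable and satisfies $f(y)\le f(x)+\langle\nabla f(x),y-x\rangle+\frac L2\|y-x\|^2$ for all $x,y$ (for a given $L>0$), and $g$ is proper, lower semicontinuous and $\gamma$-strongly convex ($\gamma\ge0$). Fix an integer $K\ge1$ and $x_0\in\mathrm{dom}(g)$. Let $a_0=A_0=0$, $a_1=A_1$ with $0<a_1\le\frac1{4L}$, and $a_s>0$ for $s\ge2$, $A_s=A_{s-1}+a_s$. Let $x_{1,1}=v_{1,0}=x_0$. Let $x_{s,k}\in\mathbb{R}^d$ ($s\ge2$, $k\in[K]$) and $q_{s,k}\in\mathbb{R}^d$ be arbitrary. Define $\psi_{1,0}(u)=\frac K2\|u-x_0\|^2$,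 $\psi_{1,1}(u)=\psi_{1,0}(u)+Ka_1(f(x_0)+\langle\nabla f(x_0),u-x_0\rangle+g(u))$, $\psi_{2,0}=\psi_{1,1}$, and for $s\ge2$, $1\le k\le K$: $\psi_{s,k}(u)=\psi_{s,k-1}(u)+a_s(f(x_{s,k})+\langle q_{s,k},u-x_{s,k}\rangle+g(u))$, with $\psi_{s+1,0}=\psi_{s,K}$. Let $v_{s,k}=\arg\min_u\psi_{s,k}(u)$ (so $v_{s+1,0}=v_{s,K}$). Let $\tilde y_1=v_{1,1}$, and for $s\ge2$: $y_{s,k}=\frac{A_{s-1}}{A_s}\tilde y_{s-1}+\frac{a_s}{A_s}v_{s,k}$ for $k\in[K]$ and $\tilde y_s=\frac1K\sum_{k=1}^Ky_{s,k}$. *)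

(* Defs.v *)
From HB Require Import structures.
From mathcomp Require Import all_boot all_order all_algebra.
From mathcomp Require Import all_classical all_reals all_analysis.
Set Implicit Arguments. Unset Strict Implicit. Unset Printing Implicit Defensive.
Import Order.TTheory GRing.Theory Num.Theory.
Import numFieldNormedType.Exports.
Local Open Scope ring_scope.

Section Defs.
Variables (R : realType) (d : nat).
Notation vec := 'rV[R]_d.

Definition dotp (u v : vec) : R := \sum_(i < d) u 0 i * v 0 i.
Definition sqn (u : vec) : R := dotp u u.

Variables (f : vec -> R) (gradf : vec -> vec) (g : vec -> \bar R)
  (K : nat) (x0 : vec) (a : nat -> R) (x q v : nat -> nat -> vec).

Definition Aseq (s : nat) : R := \sum_(i < s.+1) a i.

Definition lin (s k : nat) (u : vec) : R := f (x s k) + dotp (q s k) (u - x s k).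

Definition psi10 (u : vec) : \bar R := ((K%:R / 2) * sqn (u - x0))%:E.
Definition psi11 (u : vec) : \bar R :=
  psi10 u + (K%:R * a 1)%:E * ((f x0 + dotp (gradf x0) (u - x0))%:E + g u).

Definition stage (s k : nat) (u : vec) : \bar R :=
  (\sum_(i < k) (a s)%:E * ((lin s i.+1 u)%:E + g u))%E.

(* psi0 s = psi_{s,0} for s >= 2 (psi_{2,0} = psi_{1,1}, psi_{s+1,0} = psi_{s,K}) *)
Fixpoint psi0 (s : nat) : vec -> \bar R :=
  match s with
  | 0 | 1 | 2 => psi11
  | s'.+1 => fun u => psi0 s' u + stage s' K u
  end.

(* psi s k = psi_{s,k}, for s = 1, k in {0,1}, and s >= 2, k in {0..K} *)
Definition psi (s k : nat) (u : vec) : \bar R :=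
  match s with
  | 0 => psi10 u
  | 1 => if k == 0%N then psi10 u else psi11 u
  | _ => psi0 s u + stage s k u
  end.

Fixpoint ytilde (s : nat) : vec :=
  match s with
  | 0 => v 1 1
  | s'.+1 =>
    match s' with
    | 0 => v 1 1
    | _ => (K%:R)^-1 *: \sum_(k < K)
             ((Aseq s' / Aseq s) *: ytilde s' + (a s / Aseq s) *: v s k.+1)
    end
  end.

Definition yy (s k : nat) : vec :=
  (Aseq s.-1 / Aseq s) *: ytilde s.-1 + (a s / Aseq s) *: v s k.

Definition Err (gamma : R) (s k : nat) (u : vec) : R :=
  Aseq s * (f (yy s k) - f (x s k))
  - Aseq s.-1 * (f (ytilde s.-1) - f (x s k))
  + a s * dotp (gradf (x s k) - q s k) (x s k - u)
  + a s * dotp (q s k) (x s k - v s k)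
  - (K%:R * (1 + Aseq s.-1 * gamma) / 2) * sqn (v s k - v s k.-1).

End Defs.

(* Main.v *)
Require Import Defs.
From HB Require Import structures.
From mathcomp Require Import all_boot all_order all_algebra.
From mathcomp Require Import all_classical all_reals all_analysis.
From mathcomp Require Import ring lra.
Import Order.TTheory GRing.Theory Num.Theory.
Import numFieldNormedType.Exports.
Local Open Scope ring_scope.

Section Vec.
Variables (R : realType) (d : nat).
Implicit Types (u w y z : 'rV[R]_d) (c t : R).

Lemma dotpDl u w z : dotp (u + w) z = dotp u z + dotp w z.
Proof. rewrite /dotp -big_split; apply eq_bigr => i _; by rewrite !mxE mulrDl. Qed.
Lemma dotpDr u w z : dotp z (u + w) = dotp z u + dotp z w.
Proof. rewrite /dotp -big_split; apply eq_bigr => i _; by rewrite !mxE mulrDr. Qed.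
Lemma dotpZl c u z : dotp (c *: u) z = c * dotp u z.
Proof. rewrite /dotp mulr_sumr; apply eq_bigr => i _; by rewrite !mxE mulrA. Qed.
Lemma dotpZr c u z : dotp z (c *: u) = c * dotp z u.
Proof. rewrite /dotp mulr_sumr; apply eq_bigr => i _; rewrite !mxE; ring. Qed.
Lemma dotpNl u z : dotp (- u) z = - dotp u z.
Proof. by rewrite -scaleN1r dotpZl mulN1r. Qed.
Lemma dotpNr u z : dotp z (- u) = - dotp z u.
Proof. by rewrite -scaleN1r dotpZr mulN1r. Qed.
Lemma dotpC u z : dotp u z = dotp z u.
Proof. rewrite /dotp; apply eq_bigr => i _; by rewrite mulrC. Qed.
Lemma sqn_ge0 u : 0 <= sqn u.
Proof. rewrite /sqn /dotp; apply: sumr_ge0 => i _; by rewrite -expr2 sqr_ge0. Qed.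

Lemma sqnE y z : sqn (y - z) = sqn y - 2 * dotp y z + sqn z.
Proof.
rewrite /sqn !(dotpDl, dotpDr, dotpNl, dotpNr) (dotpC z y); ring.
Qed.

Lemma sqn_conv t y z :
  sqn (t *: y + (1 - t) *: z) = t * sqn y + (1 - t) * sqn z - t * (1 - t) * sqn (y - z).
Proof.
rewrite sqnE /sqn !(dotpDl, dotpDr, dotpZl, dotpZr) (dotpC z y); ring.
Qed.

Lemma sqnC y z : sqn (y - z) = sqn (z - y).
Proof. rewrite !sqnE (dotpC z y); ring. Qed.

Lemma sqnZ c y : sqn (c *: y) = c ^+ 2 * sqn y.
Proof. rewrite /sqn dotpZl dotpZr; ring. Qed.

Lemma dotpB_sym w y z : dotp w (y - z) = - dotp w (z - y).
Proof. rewrite !(dotpDr, dotpNr); ring. Qed.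

End Vec.

Lemma limit0 (R : realType) (X Y Z : R) :
  (forall t, 0 < t < 1 -> X <= Y + t * Z) -> X <= Y.
Proof.
move=> H.
have [Zle0|Zgt0] := lerP Z 0.
  have h2 : 0 < (2:R)^-1 < 1 by apply/andP; split; lra.
  have := H _ h2 => h; lra.
apply/ler_addgt0Pr => e e0.
have et : 0 < e + Z by lra.
have t0 : 0 < e / (e + Z) by rewrite divr_gt0.
have t1 : e / (e + Z) < 1 by rewrite ltr_pdivrMr // mul1r; lra.
have h := H _ (andb_true_intro (conj t0 t1)).
have : e / (e + Z) * Z <= e.
  by rewrite mulrAC ler_pdivrMr //; nra.
lra.
Qed.

Section Main.
Variables (R : realType) (d : nat)
  (f : 'rV[R]_d -> R) (gradf : 'rV[R]_d -> 'rV[R]_d) (g : 'rV[R]_d -> \bar R)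
  (L gamma : R) (K : nat) (x0 : 'rV[R]_d) (a : nat -> R)
  (x q v : nat -> nat -> 'rV[R]_d).
Local Notation vec := 'rV[R]_d.
Hypothesis Hfc : forall (y z : 'rV[R]_d) (t : R), 0 <= t <= 1 ->
     f (t *: y + (1 - t) *: z) <= t * f y + (1 - t) * f z.
Hypothesis HL0 : 0 < L.
Hypothesis Hsm : forall y z : 'rV[R]_d,
     f z <= f y + dotp (gradf y) (z - y) + L / 2 * sqn (z - y).
Hypothesis Hgn : forall y, g y != -oo%E.
Hypothesis Hg0 : 0 <= gamma.
Hypothesis Hgc : forall (y z : 'rV[R]_d) (t : R), 0 < t < 1 ->
     (g (t *: y + (1 - t) *: z)%R <=
      t%:E * g y + (1 - t)%R%:E * g z
      - (gamma / 2 * t * (1 - t) * sqn (y - z))%R%:E)%E.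
Hypothesis HK : (0 < K)%N.
Hypothesis Hx0 : g x0 \is a fin_num.
Hypothesis Ha0 : a 0%N = 0.
Hypothesis Ha1 : 0 < a 1%N.
Hypothesis Ha1L : a 1%N <= (4 * L)^-1.
Hypothesis Has : forall s, (2 <= s)%N -> 0 < a s.
Hypothesis Hv10 : v 1%N 0%N = x0.
Hypothesis Hmin : forall s k, ((s == 1%N) && (k <= 1)%N) || ((2 <= s)%N && (k <= K)%N) ->
     forall u, (psi f gradf g K x0 a x q s k (v s k)
                <= psi f gradf g K x0 a x q s k u)%E.

Definition Dom (y : vec) := g y \is a fin_num.
Definition G (y : vec) : R := fine (g y).
Definition H (y : vec) : R := f y + G y.

Lemma gE {y} : Dom y -> g y = (G y)%:E.
Proof. by move=> Dy; rewrite /G fineK. Qed.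

Lemma ginf {y} : ~~ Dom y -> g y = +oo%E.
Proof.
rewrite /Dom fin_numE negb_and !negbK => /orP [/eqP h|/eqP //].
by move: (Hgn y); rewrite h.
Qed.

Lemma eqle (r1 r2 : R) : r1 = r2 -> r1 <= r2.
Proof. by move=> ->. Qed.

Lemma prod4_ge0 {c t : R} (y : vec) : 0 <= c -> 0 < t < 1 -> 0 <= c / 2 * t * (1 - t) * sqn y.
Proof.
move=> c0 /andP [t0 t1].
apply: mulr_ge0; last exact: sqn_ge0.
apply: mulr_ge0; last lra.
apply: mulr_ge0; last lra.
lra.
Qed.

Lemma g_conv {y z t} : Dom y -> Dom z -> 0 < t < 1 ->
  Dom (t *: y + (1 - t) *: z) /\
  G (t *: y + (1 - t) *: z) <= t * G y + (1 - t) * G z - gamma / 2 * t * (1 - t) * sqn (y - z).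
Proof.
move=> Dy Dz Ht.
have := Hgc y z t Ht.
rewrite (gE Dy) (gE Dz) -!EFinM -EFinD.
rewrite /Dom /G.
case E: (g (t *: y + (1 - t) *: z)) => [r| |] /=.
- by rewrite lee_fin.
- by [].
- by move: (Hgn (t *: y + (1 - t) *: z)); rewrite E.
Qed.

Definition SC (m : R) (F : vec -> R) := forall y z t, Dom y -> Dom z -> 0 < t < 1 ->
  F (t *: y + (1 - t) *: z) <= t * F y + (1 - t) * F z - m / 2 * t * (1 - t) * sqn (y - z).

Lemma SC_ext {m F F'} : (forall u, F u = F' u) -> SC m F' -> SC m F.
Proof. by move=> e h y z t Dy Dz Ht; rewrite !e; apply: h. Qed.

Lemma SC_eqm {m m' F} : m = m' -> SC m F -> SC m' F.
Proof. by move=> ->. Qed.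

Lemma SC_mono {m m' F} : m' <= m -> SC m F -> SC m' F.
Proof.
move=> le h y z t Dy Dz Ht.
have := h y z t Dy Dz Ht.
have := @prod4_ge0 (m - m') t (y - z) ltac:(lra) Ht.
have e : (m - m') / 2 * t * (1 - t) * sqn (y - z) =
   m / 2 * t * (1 - t) * sqn (y - z) - m' / 2 * t * (1 - t) * sqn (y - z) by ring.
rewrite e; lra.
Qed.

Lemma SC_add {m1 m2 F1 F2} : SC m1 F1 -> SC m2 F2 -> SC (m1 + m2) (fun u => F1 u + F2 u).
Proof.
move=> h1 h2 y z t Dy Dz Ht.
have := h1 y z t Dy Dz Ht; have := h2 y z t Dy Dz Ht.
have e : (m1 + m2) / 2 * t * (1 - t) * sqn (y - z) =
   m1 / 2 * t * (1 - t) * sqn (y - z) + m2 / 2 * t * (1 - t) * sqn (y - z) by ring.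
rewrite e; lra.
Qed.

Lemma SC_scale {c m F} : 0 <= c -> SC m F -> SC (c * m) (fun u => c * F u).
Proof.
move=> c0 h y z t Dy Dz Ht.
have := ler_wpM2l c0 (h y z t Dy Dz Ht).
move=> h'; apply: (le_trans h'); apply: eqle; ring.
Qed.

Lemma SC_aff {F} : (forall y z t, F (t *: y + (1 - t) *: z) = t * F y + (1 - t) * F z) -> SC 0 F.
Proof. move=> e y z t _ _ _; rewrite e; apply: eqle; ring. Qed.

Lemma SC_G : SC gamma G.
Proof. by move=> y z t Dy Dz Ht; case: (g_conv Dy Dz Ht). Qed.

Lemma SC_quad c : 0 <= c -> SC c (fun u => c / 2 * sqn (u - x0)).
Proof.
move=> c0 y z t _ _ _.
have e : t *: y + (1 - t) *: z - x0 = t *: (y - x0) + (1 - t) *: (z - x0).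
  by apply/rowP => i; rewrite !mxE; ring.
have e2 : y - x0 - (z - x0) = y - z by apply/rowP => i; rewrite !mxE; ring.
rewrite e sqn_conv e2; apply: eqle; ring.
Qed.

Lemma SC_sum n (m : nat -> R) (F : nat -> vec -> R) :
  (forall i, SC (m i) (F i)) -> SC (\sum_(i < n) m i) (fun u => \sum_(i < n) F i u).
Proof.
move=> h; elim: n => [|n IH].
  apply: (@SC_ext _ _ (fun _ : vec => 0)) => [u|]; first by rewrite big_ord0.
  rewrite big_ord0; apply: SC_aff => y z t; ring.
apply: (@SC_ext _ _ (fun u => \sum_(i < n) F i u + F n u)) => [u|].
  by rewrite big_ord_recr.
rewrite big_ord_recr /=; exact: SC_add.
Qed.

Lemma sc_min {m F vv u} : SC m F -> Dom vv -> (forall w, Dom w -> F vv <= F w) -> Dom u ->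
  F vv + m / 2 * sqn (u - vv) <= F u.
Proof.
move=> hS Dv hmin Du.
apply: (@limit0 _ _ _ (m / 2 * sqn (u - vv))) => t Ht.
have Ht' := Ht; move/andP: Ht' => [t0 t1].
have [Dw _] := g_conv Du Dv Ht.
have h1 := hmin _ Dw.
have h2 := hS u vv t Du Dv Ht.
have : t * (F vv + m / 2 * sqn (u - vv)) <= t * (F u + t * (m / 2 * sqn (u - vv))).
  have e : t * (F u + t * (m / 2 * sqn (u - vv))) - t * (F vv + m / 2 * sqn (u - vv)) =
    (t * F u + (1 - t) * F vv - m / 2 * t * (1 - t) * sqn (u - vv)) - F vv by ring.
  rewrite -subr_ge0 e; lra.
by rewrite ler_pM2l.
Qed.

Lemma AseqS n : Aseq a n.+1 = Aseq a n + a n.+1.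
Proof. by rewrite /Aseq big_ord_recr. Qed.

Lemma Aseq1 : Aseq a 1 = a 1%N.
Proof. by rewrite AseqS /Aseq big_ord1 Ha0 add0r. Qed.

Lemma a_ge0 s : 0 <= a s.
Proof.
case: s => [|[|s]]; first by rewrite Ha0.
  exact: ltW Ha1.
exact: ltW (Has s.+2 isT).
Qed.

Lemma Aseq_gt0 n : 0 < Aseq a n.+1.
Proof.
elim: n => [|n IH]; first by rewrite Aseq1.
rewrite AseqS; have := Has n.+2 isT; lra.
Qed.

Definition P11 (u : vec) : R :=
  K%:R / 2 * sqn (u - x0) + K%:R * a 1 * (f x0 + dotp (gradf x0) (u - x0) + G u).
Definition St (s k : nat) (u : vec) : R := \sum_(i < k) a s * (lin f x q s i.+1 u + G u).
Fixpoint P0 (s : nat) (u : vec) : R :=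
  match s with
  | 0 | 1 | 2 => P11 u
  | s'.+1 => P0 s' u + St s' K u
  end.
Definition P (s k : nat) (u : vec) : R := P0 s u + St s k u.

Lemma P0S n u : P0 n.+3 u = P0 n.+2 u + St n.+2 K u.
Proof. by []. Qed.
Lemma psi0S n u : psi0 f gradf g K x0 a x q n.+3 u =
   (psi0 f gradf g K x0 a x q n.+2 u + stage f g a x q n.+2 K u)%E.
Proof. by []. Qed.

Lemma psi11E u : Dom u -> psi11 f gradf g K x0 a u = (P11 u)%:E.
Proof.
by move=> Du; rewrite /psi11 /psi10 /P11 (gE Du).
Qed.

Lemma psi11_inf u : ~~ Dom u -> psi11 f gradf g K x0 a u = +oo%E.
Proof.
move=> Du; rewrite /psi11 (ginf Du) addey // muleC gt0_mulye ?lte_fin.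
  by rewrite addey.
by apply: mulr_gt0 => //; rewrite ltr0n.
Qed.

Lemma stageE s k u : Dom u -> stage f g a x q s k u = (St s k u)%:E.
Proof.
move=> Du; rewrite /stage /St -sumEFin; apply: eq_bigr => i _.
by rewrite (gE Du) -EFinD -EFinM.
Qed.

Lemma stage_ge0 s k u : (2 <= s)%N -> ~~ Dom u -> (0 <= stage f g a x q s k u)%E.
Proof.
move=> s2 Du; apply: sume_ge0 => i _.
rewrite (ginf Du) addey // muleC gt0_mulye ?lte_fin //; exact: Has.
Qed.

Lemma psi0E n u : Dom u -> psi0 f gradf g K x0 a x q n.+2 u = (P0 n.+2 u)%:E.
Proof.
move=> Du; elim: n => [|n IH]; first exact: psi11E.
by rewrite psi0S P0S IH stageE // EFinD.
Qed.

Lemma psi0_inf n u : ~~ Dom u -> psi0 f gradf g K x0 a x q n.+2 u = +oo%E.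
Proof.
move=> Du; elim: n => [|n IH]; first exact: psi11_inf.
rewrite psi0S IH addye //.
by have := stage_ge0 n.+2 K u isT Du; case: (stage _ _ _ _ _ _ _ _).
Qed.

Lemma psiE n k u : Dom u -> psi f gradf g K x0 a x q n.+2 k u = (P n.+2 k u)%:E.
Proof. by move=> Du; rewrite /psi psi0E // stageE // /P EFinD. Qed.

Lemma psi_inf n k u : ~~ Dom u -> psi f gradf g K x0 a x q n.+2 k u = +oo%E.
Proof.
move=> Du; rewrite /psi psi0_inf // addye //.
by have := stage_ge0 n.+2 k u isT Du; case: (stage _ _ _ _ _ _ _ _).
Qed.

Lemma Dom_x0 : Dom x0.
Proof. exact: Hx0. Qed.

Lemma minP n {k} : (k <= K)%N ->
  Dom (v n.+2 k) /\ forall w, Dom w -> P n.+2 k (v n.+2 k) <= P n.+2 k w.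
Proof.
move=> kK; have hm := Hmin n.+2 k (ltac:(by rewrite kK orbT)).
have Dv : Dom (v n.+2 k).
  apply/negPn/negP => nD; have := hm x0.
  by rewrite psi_inf // psiE ?Dom_x0.
split => // w Dw; have := hm w.
by rewrite !psiE // lee_fin.
Qed.

Lemma min11 : Dom (v 1 1) /\ forall w, Dom w -> P11 (v 1 1) <= P11 w.
Proof.
have hm := Hmin 1 1 isT.
have e : forall u, psi f gradf g K x0 a x q 1 1 u = psi11 f gradf g K x0 a u by [].
have Dv : Dom (v 1 1).
  apply/negPn/negP => nD; have := hm x0.
  by rewrite !e psi11_inf // psi11E ?Dom_x0.
split => // w Dw; have := hm w.
by rewrite !e !psi11E // lee_fin.
Qed.


Lemma aff_dot (c : R) (w p : vec) y z t :
  c + dotp w (t *: y + (1 - t) *: z - p) = t * (c + dotp w (y - p)) + (1 - t) * (c + dotp w (z - p)).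
Proof.
have e : t *: y + (1 - t) *: z - p = t *: (y - p) + (1 - t) *: (z - p).
  by apply/rowP => i; rewrite !mxE; ring.
rewrite e dotpDr !dotpZr; ring.
Qed.

Lemma Kge0 : 0 <= K%:R :> R.
Proof. exact: ler0n. Qed.

Lemma SC_P11 : SC (K%:R + K%:R * a 1 * gamma) P11.
Proof.
have Ka1 : 0 <= K%:R * a 1 by apply: mulr_ge0; [exact: Kge0 | exact: a_ge0].
have h := SC_add (SC_quad (K%:R) Kge0) (SC_scale Ka1 (SC_add
   (SC_aff (F := fun u => f x0 + dotp (gradf x0) (u - x0)) (fun y z t => aff_dot _ _ _ y z t)) SC_G)).
have e : K%:R + K%:R * a 1 * (0 + gamma) = K%:R + K%:R * a 1 * gamma by ring.
rewrite e in h; apply: (SC_ext _ h) => u /=; rewrite /P11; ring.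
Qed.

Lemma SC_St s k : SC ((a s * gamma) *+ k) (St s k).
Proof.
have h := SC_sum k (fun _ => a s * (0 + gamma))
  (fun i u => a s * (lin f x q s i.+1 u + G u))
  (fun i => SC_scale (a_ge0 s) (SC_add (SC_aff (F := lin f x q s i.+1) (fun y z t => aff_dot _ _ _ y z t)) SC_G)).
move: h; rewrite sumr_const card_ord add0r => h.
exact: (SC_ext _ h).
Qed.

Lemma SC_P0 n : SC (K%:R + K%:R * Aseq a n.+1 * gamma) (P0 n.+2).
Proof.
elim: n => [|n IH]; first by rewrite Aseq1; exact: SC_P11.
have h := SC_add IH (SC_St n.+2 K).
have e : K%:R + K%:R * Aseq a n.+1 * gamma + (a n.+2 * gamma) *+ K =
  K%:R + K%:R * Aseq a n.+2 * gamma by rewrite (AseqS n.+1) -mulr_natl; ring.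
rewrite e in h; apply: (SC_ext _ h) => u; exact: P0S.
Qed.

Lemma SC_P n k : SC (K%:R + K%:R * Aseq a n.+1 * gamma + (a n.+2 * gamma) *+ k) (P n.+2 k).
Proof. exact: (SC_ext _ (SC_add (SC_P0 n) (SC_St n.+2 k))). Qed.

Lemma SC_Pmin n k : SC (K%:R * (1 + Aseq a n.+1 * gamma)) (P n.+2 k).
Proof.
apply: SC_mono (SC_P n k).
have : 0 <= (a n.+2 * gamma) *+ k by apply: mulrn_wge0; apply: mulr_ge0 => //; exact: a_ge0.
lra.
Qed.

Lemma grad_ineq y u : f y + dotp (gradf y) (u - y) <= f u.
Proof.
apply: (@limit0 _ _ _ (L / 2 * sqn (u - y))) => t /andP [t0 t1].
set w := y + (- t) *: (u - y).
have t1' : 0 < 1 + t by lra.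
have tau : 0 <= (1 + t)^-1 <= 1.
  apply/andP; split; first by rewrite invr_ge0; lra.
  by rewrite invf_le1 //; lra.
have hc := Hfc w u _ tau.
have ew : (1 + t)^-1 *: w + (1 - (1 + t)^-1) *: u = y.
  apply/rowP => i; rewrite /w !mxE; field; exact: lt0r_neq0.
rewrite ew in hc.
have hs := Hsm y w.
have e2 : w - y = (- t) *: (u - y) by rewrite /w addrAC subrr add0r.
rewrite e2 dotpZr sqnZ in hs.
have h3 : f y * (1 + t) <= f w + t * f u.
  have e3 : ((1 + t)^-1 * f w + (1 - (1 + t)^-1) * f u) * (1 + t) = f w + t * f u.
    by field; exact: lt0r_neq0.
  by rewrite -e3 ler_pM2r.
have : t * (f y + dotp (gradf y) (u - y)) <= t * (f u + t * (L / 2 * sqn (u - y))).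
  move: hs h3; rewrite sqrrN; lra.
by rewrite ler_pM2l.
Qed.

Lemma lin_ub s k u : lin f x q s k u <= f u + dotp (gradf (x s k) - q s k) (x s k - u).
Proof.
have := grad_ineq (x s k) u.
rewrite /lin dotpDl dotpNl (dotpB_sym _ _ (gradf (x s k)) (x s k) u) (dotpB_sym _ _ (q s k) (x s k) u).
lra.
Qed.

Lemma St_ub s k u : St s k u <=
  \sum_(i < k) (a s * H u + a s * dotp (gradf (x s i.+1) - q s i.+1) (x s i.+1 - u)).
Proof.
rewrite /St; apply: ler_sum => i _.
rewrite -mulrDr; apply: ler_wpM2l; first exact: a_ge0.
have := lin_ub s i.+1 u; rewrite /H; lra.
Qed.

Lemma P0_ub n u : P0 n.+2 u <= K%:R / 2 * sqn (u - x0) + K%:R * Aseq a n.+1 * H u +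
  \sum_(2 <= s < n.+2) \sum_(i < K) a s * dotp (gradf (x s i.+1) - q s i.+1) (x s i.+1 - u).
Proof.
elim: n => [|n IH].
  rewrite big_geq // addr0 Aseq1 /=.
  have := grad_ineq x0 u.
  have Ka1 : 0 <= K%:R * a 1 by apply: mulr_ge0; [exact: Kge0 | exact: a_ge0].
  move=> h; rewrite /P11 /H.
  have := ler_wpM2l Ka1 (_ : f x0 + dotp (gradf x0) (u - x0) + G u <= f u + G u).
  move=> /(_ ltac:(lra)); lra.
rewrite P0S big_nat_recr //.
have := St_ub n.+2 K u.
rewrite big_split sumr_const card_ord -(mulr_natl (a n.+2 * H u) K) (AseqS n.+1).
move: IH; move: (P0 n.+2 u) => p /=; lra.
Qed.

Lemma H_conv {y z t} : Dom y -> Dom z -> 0 < t < 1 ->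
  Dom (t *: y + (1 - t) *: z) /\ H (t *: y + (1 - t) *: z) <= t * H y + (1 - t) * H z.
Proof.
move=> Dy Dz Ht; have [Dw hg] := g_conv Dy Dz Ht.
split => //.
have Ht' : 0 <= t <= 1 by move/andP: Ht => [? ?]; apply/andP; split; lra.
have hf := Hfc y z t Ht'.
have := prod4_ge0 (y - z) Hg0 Ht.
rewrite /H; lra.
Qed.

Lemma jensen n (p : nat -> vec) : (forall i, (i <= n)%N -> Dom (p i)) ->
  Dom (n.+1%:R^-1 *: \sum_(i < n.+1) p i) /\
  n.+1%:R * H (n.+1%:R^-1 *: \sum_(i < n.+1) p i) <= \sum_(i < n.+1) H (p i).
Proof.
elim: n => [|n IH] hp.
  rewrite !big_ord1 invr1 scale1r mul1r; split => //; exact: hp.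
have [D1 h1] := IH (fun i hi => hp i (leqW hi)).
set N := n.+1%:R : R.
have N0 : 0 < N by rewrite /N ltr0n.
have eN : n.+2%:R = N + 1 :> R by rewrite /N -natr1.
set t := N / (N + 1).
have Ht : 0 < t < 1.
  apply/andP; split; first by rewrite divr_gt0 //; lra.
  by rewrite ltr_pdivrMr; lra.
have ea : n.+2%:R^-1 *: \sum_(i < n.+2) p i =
   t *: (N^-1 *: \sum_(i < n.+1) p i) + (1 - t) *: p n.+1.
  rewrite big_ord_recr /= scalerDr scalerA eN; congr (_ *: _ + _ *: _).
    rewrite /t; field; apply/andP; split; apply: lt0r_neq0; lra.
  rewrite /t; field; apply: lt0r_neq0; lra.
have [D2 h2] := H_conv D1 (hp n.+1 (leqnn _)) Ht.
rewrite ea; split => //.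
rewrite [X in _ <= X]big_ord_recr /= eN.
have e3 : (N + 1) * (t * H (N^-1 *: \sum_(i < n.+1) p i) + (1 - t) * H (p n.+1)) =
   N * H (N^-1 *: \sum_(i < n.+1) p i) + H (p n.+1).
  by rewrite /t; field; apply: lt0r_neq0; lra.
have h4 := ler_wpM2l (_ : 0 <= N + 1) h2.
move: h4 => /(_ ltac:(lra)); rewrite e3; move: h1; rewrite -/N; lra.
Qed.

Lemma G_comb {al be y z} : 0 < al -> 0 < be -> Dom y -> Dom z ->
  Dom ((al / (al + be)) *: y + (be / (al + be)) *: z) /\
  (al + be) * G ((al / (al + be)) *: y + (be / (al + be)) *: z) <= al * G y + be * G z.
Proof.
move=> a0 b0 Dy Dz.
have ab : 0 < al + be by lra.
have e : be / (al + be) = 1 - al / (al + be) by field; apply: lt0r_neq0.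
have Ht : 0 < al / (al + be) < 1.
  by apply/andP; split; [rewrite divr_gt0 | rewrite ltr_pdivrMr //]; lra.
rewrite e; have [Dw hw] := g_conv Dy Dz Ht.
split => //.
have := prod4_ge0 (y - z) Hg0 Ht => hp.
have h := ler_wpM2l (ltW ab) hw.
apply: (le_trans h).
have e2 : (al + be) * (al / (al + be) * G y + (1 - al / (al + be)) * G z -
    gamma / 2 * (al / (al + be)) * (1 - al / (al + be)) * sqn (y - z)) =
   al * G y + be * G z - (al + be) * (gamma / 2 * (al / (al + be)) * (1 - al / (al + be)) * sqn (y - z)).
  by field; apply: lt0r_neq0.
rewrite e2; have := mulr_ge0 (ltW ab) hp; lra.
Qed.


Definition Ep (s k : nat) : R :=
  Aseq a s * (f (yy K a v s k) - f (x s k))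
  - Aseq a s.-1 * (f (ytilde K a v s.-1) - f (x s k))
  + a s * dotp (q s k) (x s k - v s k)
  - (K%:R * (1 + Aseq a s.-1 * gamma) / 2) * sqn (v s k - v s k.-1).

Lemma ErrE s k u : Err f gradf K a x q v gamma s k u =
  Ep s k + a s * dotp (gradf (x s k) - q s k) (x s k - u).
Proof. rewrite /Err /Ep; ring. Qed.

Lemma PS n k u : P n.+2 k.+1 u = P n.+2 k u + a n.+2 * (lin f x q n.+2 k.+1 u + G u).
Proof. by rewrite /P /St big_ord_recr addrA. Qed.

Lemma tele n k : (k <= K)%N ->
  P n.+2 0 (v n.+2 0) + \sum_(i < k) (K%:R * (1 + Aseq a n.+1 * gamma) / 2 *
     sqn (v n.+2 i.+1 - v n.+2 i) + a n.+2 * (lin f x q n.+2 i.+1 (v n.+2 i.+1) + G (v n.+2 i.+1)))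
  <= P n.+2 k (v n.+2 k).
Proof.
elim: k => [|k IH] hk; first by rewrite big_ord0 addr0.
have hk' : (k <= K)%N by apply: ltnW.
have [Dk mk] := minP n hk'.
have [Dk1 _] := minP n hk.
have hsc := sc_min (SC_Pmin n k) Dk mk Dk1.
rewrite big_ord_recr /= PS.
move: (IH hk') hsc; lra.
Qed.

Lemma stepk {m} i : Dom (ytilde K a v m.+1) -> Dom (v m.+2 i.+1) ->
  Dom (yy K a v m.+2 i.+1) /\
  Aseq a m.+2 * H (yy K a v m.+2 i.+1) - Ep m.+2 i.+1 <=
  Aseq a m.+1 * H (ytilde K a v m.+1) + (K%:R * (1 + Aseq a m.+1 * gamma) / 2 *
     sqn (v m.+2 i.+1 - v m.+2 i) + a m.+2 * (lin f x q m.+2 i.+1 (v m.+2 i.+1) + G (v m.+2 i.+1))).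
Proof.
move=> Dy Dv.
have e1 : yy K a v m.+2 i.+1 = (Aseq a m.+1 / Aseq a m.+2) *: ytilde K a v m.+1 +
   (a m.+2 / Aseq a m.+2) *: v m.+2 i.+1 by [].
have [Dw hw] := G_comb (Aseq_gt0 m) (Has m.+2 isT) Dy Dv.
rewrite -(AseqS m.+1) -e1 in Dw hw.
split => //.
have eE : Ep m.+2 i.+1 = Aseq a m.+2 * (f (yy K a v m.+2 i.+1) - f (x m.+2 i.+1))
  - Aseq a m.+1 * (f (ytilde K a v m.+1) - f (x m.+2 i.+1))
  + a m.+2 * dotp (q m.+2 i.+1) (x m.+2 i.+1 - v m.+2 i.+1)
  - (K%:R * (1 + Aseq a m.+1 * gamma) / 2) * sqn (v m.+2 i.+1 - v m.+2 i) by [].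
rewrite eE /H /lin (dotpB_sym _ _ (q m.+2 i.+1) (x m.+2 i.+1) (v m.+2 i.+1)) (AseqS m.+1).
move: hw; rewrite (AseqS m.+1); lra.
Qed.

Lemma stage_step m (C : R) : Dom (ytilde K a v m.+1) ->
  K%:R * Aseq a m.+1 * H (ytilde K a v m.+1) + C <= P m.+2 0 (v m.+2 0) ->
  Dom (ytilde K a v m.+2) /\
  K%:R * Aseq a m.+2 * H (ytilde K a v m.+2) + C - \sum_(1 <= k < K.+1) Ep m.+2 k
  <= P m.+2 K (v m.+2 K).
Proof.
move=> Dy hI.
have ht := tele m K (leqnn K).
have hD : forall i, (i <= K.-1)%N -> Dom (yy K a v m.+2 i.+1).
  move=> i hi.
  have hi' : (i.+1 <= K)%N by rewrite -(prednK HK) ltnS.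
  have [Dv _] := minP m hi'.
  by have [Dw _] := stepk i Dy Dv.
have ety : ytilde K a v m.+2 = K%:R^-1 *: \sum_(i < K) yy K a v m.+2 i.+1 by [].
have hJ := jensen K.-1 (fun i => yy K a v m.+2 i.+1) hD.
rewrite (prednK HK) in hJ.
move: hJ => [DJ hJ].
rewrite ety; split => //.
have hs : \sum_(i < K) (Aseq a m.+2 * H (yy K a v m.+2 i.+1) - Ep m.+2 i.+1) <=
  \sum_(i < K) (Aseq a m.+1 * H (ytilde K a v m.+1) + (K%:R * (1 + Aseq a m.+1 * gamma) / 2 *
     sqn (v m.+2 i.+1 - v m.+2 i) + a m.+2 * (lin f x q m.+2 i.+1 (v m.+2 i.+1) + G (v m.+2 i.+1)))).
  apply: ler_sum => i _.
  have [Dv _] := minP m (ltn_ord i).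
  by have [_ h] := stepk i Dy Dv.
set Y := ytilde K a v m.+1 in hs hI.
rewrite [X in _ <= X]big_split sumr_const card_ord -(mulr_natl (Aseq a m.+1 * H Y) K) sumrB -mulr_sumr /= in hs.
have hJ' := ler_wpM2l (ltW (Aseq_gt0 m.+1)) hJ.
have eS : \sum_(1 <= k < K.+1) Ep m.+2 k = \sum_(i < K) Ep m.+2 i.+1.
  by rewrite big_add1 /= big_mkord.
rewrite eS.
move: ht hs hJ' hI; lra.
Qed.

Lemma base : Dom (v 1 1) /\
  K%:R * Aseq a 1 * H (v 1 1) + K%:R / 4 * sqn (v 1 1 - v 1 0) <= P11 (v 1 1).
Proof.
have [D11 _] := min11; split => //.
rewrite Aseq1 Hv10 /P11 /H.
have hs := Hsm x0 (v 1 1).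
have L4 : 0 < 4 * L by have := HL0; lra.
have hL : a 1 * (4 * L) <= 1 by rewrite -ler_pdivlMr // div1r.
have Ka1 : 0 <= K%:R * a 1 by apply: mulr_ge0; [exact: Kge0 | exact: a_ge0].
have h1 := ler_wpM2l Ka1 hs.
have KS : 0 <= K%:R * sqn (v 1 1 - x0) by apply: mulr_ge0; [exact: Kge0 | exact: sqn_ge0].
have h2 := ler_wpM2l KS hL.
move: h1 h2 KS; lra.
Qed.

Lemma minval (F : vec -> R) (v1 v2 : vec) : Dom v1 -> Dom v2 -> (forall w, Dom w -> F v1 <= F w) ->
  (forall w, Dom w -> F v2 <= F w) -> F v1 = F v2.
Proof. by move=> D1 D2 h1 h2; apply/le_anti/andP; split; [apply: h1 | apply: h2]. Qed.

Lemma mainC n : Dom (ytilde K a v n.+2) /\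
  K%:R * Aseq a n.+2 * H (ytilde K a v n.+2) + K%:R / 4 * sqn (v 1 1 - v 1 0)
  - \sum_(2 <= s < n.+3) \sum_(1 <= k < K.+1) Ep s k <= P n.+2 K (v n.+2 K).
Proof.
elim: n => [|n [Dy IH]].
  have [D11 hb] := base.
  have [D20 m20] := minP 0 (leq0n K).
  have [_ m11] := min11.
  have e : P 2 0 (v 2 0) = P11 (v 1 1).
    have e0 : forall u, P 2 0 u = P11 u by move=> u; rewrite /P /St big_ord0 addr0.
    rewrite e0; apply: (minval P11) => // w Dw; rewrite -!e0; exact: m20.
  have := @stage_step 0 (K%:R / 4 * sqn (v 1 1 - v 1 0)) D11.
  rewrite e => /(_ hb) [D2 h]; split => //.
  by rewrite big_nat1.
have [D30 m30] := minP n.+1 (leq0n K).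
have [DK mK] := minP n (leqnn K).
have e : P n.+3 0 (v n.+3 0) = P n.+2 K (v n.+2 K).
  have e0 : forall u, P n.+3 0 u = P n.+2 K u by move=> u; rewrite /P /St big_ord0 addr0.
  rewrite e0; apply: (minval (P n.+2 K)) => // w Dw; rewrite -!e0; exact: m30.
have := @stage_step n.+1 (K%:R / 4 * sqn (v 1 1 - v 1 0)
   - \sum_(2 <= s < n.+3) \sum_(1 <= k < K.+1) Ep s k) Dy.
rewrite e => /(_ ltac:(lra)) [D2 h]; split => //.
rewrite (big_nat_recr n.+3) //=.
move: h; lra.
Qed.


Lemma final_main u n :
  ((K%:R * Aseq a n.+2)%R%:E *
     ((f (ytilde K a v n.+2))%:E + g (ytilde K a v n.+2) - ((f u)%:E + g u))
   <= (K%:R / 2 * sqn (x0 - u)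
       - K%:R * (1 + Aseq a n.+2 * gamma) / 2 * sqn (v n.+2 K - u)
       - K%:R / 4 * sqn (v 1%N 1%N - v 1%N 0%N)
       + \sum_(2 <= s < n.+3) \sum_(1 <= k < K.+1)
            Err f gradf K a x q v gamma s k u)%R%:E)%E.
Proof.
have [Dy hC] := mainC n.
have KA : 0 < K%:R * Aseq a n.+2 by rewrite mulr_gt0 // ?ltr0n // Aseq_gt0.
have [Du|Du] := boolP (Dom u); last first.
  rewrite (ginf Du) addey // (gE Dy) -EFinD addeNy muleC gt0_mulNye ?lte_fin //.
  exact: leNye.
have -> : ((f (ytilde K a v n.+2))%:E + g (ytilde K a v n.+2) - ((f u)%:E + g u))%E =
   (H (ytilde K a v n.+2) - H u)%:E by rewrite (gE Dy) (gE Du).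
rewrite -EFinM lee_fin.
have [DK mK] := minP n (leqnn K).
have hsc := sc_min (SC_P n K) DK mK Du.
have hub := P0_ub n.+1 u.
have ePK : P n.+2 K u = P0 n.+3 u by [].
rewrite -ePK in hub.
have eErr : \sum_(2 <= s < n.+3) \sum_(1 <= k < K.+1) Err f gradf K a x q v gamma s k u =
  \sum_(2 <= s < n.+3) \sum_(1 <= k < K.+1) Ep s k +
  \sum_(2 <= s < n.+3) \sum_(i < K) a s * dotp (gradf (x s i.+1) - q s i.+1) (x s i.+1 - u).
  rewrite -big_split; apply: eq_bigr => s _.
  rewrite -[X in _ = _ + X](@big_mkord _ _ _ K (fun _ => true)
    (fun i => a s * dotp (gradf (x s i.+1) - q s i.+1) (x s i.+1 - u))).
  rewrite -(big_add1 _ _ 0 K.+1 (fun _ => true) (fun i => a s * dotp (gradf (x s i) - q s i) (x s i - u))).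
  rewrite -big_split; apply: eq_bigr => k _; exact: ErrE.
rewrite eErr (sqnC _ _ x0 u) (sqnC _ _ (v n.+2 K) u).
rewrite -(mulr_natl (a n.+2 * gamma) K) in hsc.
rewrite (AseqS n.+1) in hC hub KA *.
move: hC hsc hub; lra.
Qed.

End Main.

Theorem lemma5 (R : realType) (d : nat)
  (f : 'rV[R]_d -> R) (gradf : 'rV[R]_d -> 'rV[R]_d) (g : 'rV[R]_d -> \bar R)
  (L gamma : R) (K : nat) (x0 : 'rV[R]_d) (a : nat -> R)
  (x q v : nat -> nat -> 'rV[R]_d) :
  (* f convex *)
  (forall (y z : 'rV[R]_d) (t : R), 0 <= t <= 1 ->
     f (t *: y + (1 - t) *: z) <= t * f y + (1 - t) * f z) ->
  (* f continuously differentiable with gradient gradf *)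
  (forall y : 'rV[R]_d, differentiable f y) ->
  (forall y h : 'rV[R]_d, 'd f y h = dotp (gradf y) h) ->
  continuous gradf ->
  (* L-smoothness upper bound *)
  0 < L ->
  (forall y z : 'rV[R]_d,
     f z <= f y + dotp (gradf y) (z - y) + L / 2 * sqn (z - y)) ->
  (* g proper, lower semicontinuous, gamma-strongly convex *)
  (forall y, g y != -oo%E) ->
  lower_semicontinuous g ->
  0 <= gamma ->
  (forall (y z : 'rV[R]_d) (t : R), 0 < t < 1 ->
     (g (t *: y + (1 - t) *: z)%R <=
      t%:E * g y + (1 - t)%R%:E * g z
      - (gamma / 2 * t * (1 - t) * sqn (y - z))%R%:E)%E) ->
  (* K >= 1, x0 in dom g *)
  (0 < K)%N ->
  g x0 \is a fin_num ->
  (* step sizes *)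
  a 0%N = 0 -> 0 < a 1%N -> a 1%N <= (4 * L)^-1 ->
  (forall s, (2 <= s)%N -> 0 < a s) ->
  (* v_{1,0} = x_0 and v_{s,k} = argmin psi_{s,k} *)
  v 1%N 0%N = x0 ->
  (forall s k, ((s == 1%N) && (k <= 1)%N) || ((2 <= s)%N && (k <= K)%N) ->
     forall u, (psi f gradf g K x0 a x q s k (v s k)
                <= psi f gradf g K x0 a x q s k u)%E) ->
  forall (u : 'rV[R]_d) (S : nat), (2 <= S)%N ->
  ((K%:R * Aseq a S)%R%:E *
     ((f (ytilde K a v S))%:E + g (ytilde K a v S) - ((f u)%:E + g u))
   <= (K%:R / 2 * sqn (x0 - u)
       - K%:R * (1 + Aseq a S * gamma) / 2 * sqn (v S K - u)
       - K%:R / 4 * sqn (v 1%N 1%N - v 1%N 0%N)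
       + \sum_(2 <= s < S.+1) \sum_(1 <= k < K.+1)
            Err f gradf K a x q v gamma s k u)%R%:E)%E.
Proof.
move=> Hfc _ _ _ HL0 Hsm Hgn _ Hg0 Hgc HK Hx0 Ha0 Ha1 Ha1L Has Hv10 Hmin u [|[|n]] // _.
exact: (@final_main _ _ _ _ _ _ _ _ _ _ _ _ _ Hfc HL0 Hsm Hgn Hg0 Hgc HK Hx0 Ha0 Ha1 Ha1L Has Hv10 Hmin).
Qed.
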